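(* (I-optimality bounds.) In the setting of the context, every $I$-optimal design $\mathbf d^*$ with $\boldsymbol\Sigma^*=\mathbf M(\mathbf d^* )^{-1}=(c^*_{jk})$ satisfies, for all $j,k\in\{1,\dots,m\}$, $$|c^*_{jk}|\le\alpha\big[(\mathbf F\mathbf F')^{-1}_{jj}(\mathbf F\mathbf F')^{-1}_{kk}\big]^{1/2},$$ and for $j\ne k$, $$|c^*_{jk}|\le\frac{\alpha}{2}\lambda_{\max}\big(\mathbf E_{jk}'(\mathbf F\mathbf F')^{-1}\mathbf E_{jk}\big),$$ where $\alpha=\mathrm{tr}(\mathbf F'\mathbf M(\mathbf d_0)^{-1}\mathbf F)$.
   Context: $\mathbf f_1,\dots,\mathbf f_n\in\mathbb R^m$ span $\mathbb R^m$, $2\le m\le N\le n$, and $\mathbf F=(\mathbf f_1,\dots,\mathbf f_n)$ ($m\times n$). A (binary) design is $\mathbf d\in\{0,1\}^n$ with $\sum_i d_i=N$, with information matrix $\mathbf M(\mathbf d)=\sum_i d_i\mathbf f_i\mathbf f_i'$. An $I$-optimal design minimizes $\sum_{i=1}^n\mathbf f_i'\mathbf M(\mathbf d)^{-1}\mathbf f_i=\mathrm{tr}(\mathbf F'\mathbf M(\mathbf d)^{-1}\mathbf F)$ over designs with nonsingular $\mathbf M(\mathbf d)$. $\mathbf d_0$ is a design with nonsingular $\mathbf M(\mathbf d_0)$. $\mathbf E_{jk}=(\mathbf e_j,\mathbf e_k)$ with $\mathbf e_j$ the $j$-th unit vector; $\mathbf A_{jj}$ is the $(j,j)$ entry; $\lambda_{\max}$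 the largest eigenvalue. *)

(* Defs.v *)
From HB Require Import structures.
From mathcomp Require Import all_boot all_order all_algebra.
Set Implicit Arguments. Unset Strict Implicit. Unset Printing Implicit Defensive.
Import Order.TTheory GRing.Theory Num.Theory.
Local Open Scope ring_scope.

Section Defs.
Variable R : rcfType.

(* A binary design with N runs among n candidate points. *)
Definition is_design (n N : nat) (d : 'I_n -> bool) : Prop :=
  (\sum_(i < n) (d i : nat))%N = N.

Definition info_mx (m n : nat) (F : 'M[R]_(m, n)) (d : 'I_n -> bool) : 'M[R]_m :=
  \sum_(i < n) (d i)%:R *: (col i F *m (col i F)^T).

Definition Icrit (m n : nat) (F : 'M[R]_(m, n)) (d : 'I_n -> bool) : R :=
  \tr (F^T *m invmx (info_mx F d) *m F).

Definition I_optimal (m n N : nat) (F : 'M[R]_(m, n)) (d : 'I_n -> bool) : Prop :=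
  [/\ is_design N d, info_mx F d \in unitmx &
      forall d' : 'I_n -> bool, is_design N d' -> info_mx F d' \in unitmx ->
        Icrit F d <= Icrit F d'].

Definition Ejk (m : nat) (j k : 'I_m) : 'M[R]_(m, 1 + 1) :=
  row_mx (delta_mx j ord0) (delta_mx k ord0).

Definition is_lambda_max (p : nat) (A : 'M[R]_p) (lam : R) : Prop :=
  eigenvalue A lam /\ (forall mu, eigenvalue A mu -> mu <= lam).
End Defs.

(* Main.v *)
Require Import Defs.
From HB Require Import structures.
From mathcomp Require Import all_boot all_order all_algebra.
From mathcomp Require Import ring lra.
Import Order.TTheory GRing.Theory Num.Theory.
Local Open Scope ring_scope.

Section Helpers.
Variable R : rcfType.

Lemma CS n (c a b : 'I_n -> R) : (forall i, 0 <= c i) ->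
  (\sum_i c i * (a i * b i))^+2 <= (\sum_i c i * (a i * a i)) * (\sum_i c i * (b i * b i)).
Proof.
move=> c0.
have key : \sum_i \sum_j c i * c j * (a i * b j - a j * b i)^+2 =
   (\sum_i c i * (a i * a i)) * (\sum_i c i * (b i * b i))
 + (\sum_i c i * (a i * a i)) * (\sum_i c i * (b i * b i))
 - 2 * (\sum_i c i * (a i * b i))^+2.
  rewrite {2}[(\sum_i c i * (a i * a i)) * _]mulrC !mulr_suml expr2 !mulr_suml mulr_sumr.
  rewrite -big_split -sumrB /=; apply: eq_bigr => i _.
  rewrite !mulr_sumr -!big_split -sumrB /=; apply: eq_bigr => j _.
  ring.
have : 0 <= \sum_i \sum_j c i * c j * (a i * b j - a j * b i)^+2.
  apply/sumr_ge0 => i _; apply/sumr_ge0 => j _.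
  by apply: mulr_ge0; [apply: mulr_ge0 | apply: sqr_ge0].
rewrite key; lra.
Qed.

Lemma form_sum m n (P : 'rV[R]_m) (Q : 'cV[R]_m) (c : 'I_n -> R) (g : 'I_n -> 'cV[R]_m) :
 (P *m (\sum_i c i *: (g i *m (g i)^T)) *m Q) 0 0
   = \sum_i c i * ((P *m g i) 0 0 * ((g i)^T *m Q) 0 0).
Proof.
rewrite mulmx_sumr mulmx_suml summxE; apply: eq_bigr => i _.
rewrite -scalemxAr -scalemxAl mxE; congr (_ * _).
by rewrite mulmxA -(mulmxA (P *m g i)) [LHS]mxE big_ord1.
Qed.

Lemma scC m (u w : 'cV[R]_m) : (u^T *m w) 0 0 = (w^T *m u) 0 0.
Proof. by have := congr1 (fun A : 'M_1 => A 0 0) (trmx_mul u^T w); rewrite trmxK mxE => <-. Qed.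

Lemma sum_sym m n (c : 'I_n -> R) (g : 'I_n -> 'cV[R]_m) :
  (\sum_i c i *: (g i *m (g i)^T))^T = \sum_i c i *: (g i *m (g i)^T).
Proof.
apply/matrixP => a b; rewrite !mxE !summxE; apply: eq_bigr => i _.
by rewrite !mxE; congr (_ * _); rewrite !big_ord1 !mxE mulrC. Qed.

Lemma FFT m n (F : 'M[R]_(m, n)) : F *m F^T = \sum_i 1 *: (col i F *m (col i F)^T).
Proof.
apply/matrixP => a b; rewrite !mxE summxE; apply: eq_bigr => i _.
by rewrite scale1r !mxE big_ord1 !mxE.
Qed.

Lemma entry_form m p q (X : 'M[R]_(m, p)) (G : 'M[R]_m) (Y : 'M[R]_(m, q)) a b :
  (X^T *m G *m Y) a b = ((col a X)^T *m G *m col b Y) 0 0.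
Proof.
rewrite !mxE; apply: eq_bigr => r _; rewrite !mxE; congr (_ * _).
by apply: eq_bigr => s _; rewrite !mxE.
Qed.

Lemma form_delta m (A : 'M[R]_m) j k :
  ((delta_mx j 0 : 'cV_m)^T *m A *m (delta_mx k 0 : 'cV_m)) 0 0 = A j k.
Proof. by rewrite trmx_delta -rowE -colE !mxE. Qed.

Lemma eD p q (A B : 'M[R]_(p, q)) i j : (A + B) i j = A i j + B i j.
Proof. by rewrite mxE. Qed.
Lemma eZ p q t (A : 'M[R]_(p, q)) i j : (t *: A) i j = t * A i j.
Proof. by rewrite mxE. Qed.

Lemma formJK m (A : 'M[R]_m) j k t :
  let v := (delta_mx j 0 : 'cV_m) + t *: (delta_mx k 0 : 'cV_m) in
  (v^T *m A *m v) 0 0 = A j j + t * A j k + t * A k j + t ^+ 2 * A k k.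
Proof.
move=> v; have -> : v^T = (delta_mx j 0 : 'cV_m)^T + t *: (delta_mx k 0 : 'cV_m)^T by apply/matrixP=> a b; rewrite !mxE.
rewrite /v !mulmxDl !mulmxDr -!scalemxAl -!scalemxAr !eD !eZ !form_delta; ring. Qed.

Let i1 : 'I_2 := lift ord0 ord0.

Lemma ord2_cases (jj : 'I_2) : jj = ord0 \/ jj = i1.
Proof. by case: jj => [[|[|k]]] H; [left; apply: val_inj | right; apply: val_inj | ]. Qed.

Lemma vB (B : 'M[R]_2) (v : 'rV[R]_2) jj : (v *m B) 0 jj = v 0 ord0 * B ord0 jj + v 0 i1 * B i1 jj.
Proof. by rewrite mxE big_ord_recl big_ord1. Qed.

Lemma eig2 (B : 'M[R]_2) mu x0 x1 : (x0 != 0 \/ x1 != 0) ->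
  x0 * B ord0 ord0 + x1 * B i1 ord0 = mu * x0 ->
  x0 * B ord0 i1 + x1 * B i1 i1 = mu * x1 -> eigenvalue B mu.
Proof.
move=> nz e0 e1; apply/eigenvalueP.
exists (\row_(i < 2) if i == ord0 then x0 else x1).
  apply/matrixP => i jj; rewrite (ord1 i) vB !mxE /=.
  by case: (ord2_cases jj) => ->; rewrite /= ?e0 ?e1.
apply/negP => /eqP/matrixP H0; have := H0 0 ord0; have := H0 0 i1.
rewrite !mxE /= => h1 h0; by case: nz; rewrite ?h0 ?h1 eqxx.
Qed.

Lemma lam2 (B : 'M[R]_2) lam s : B ord0 i1 = B i1 ord0 -> is_lambda_max B lam -> s ^+ 2 = 1 ->
  B ord0 ord0 + s * (B ord0 i1 + B i1 ord0) + B i1 i1 <= 2 * lam.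
Proof.
set a := B ord0 ord0; set b := B ord0 i1; set c := B i1 i1.
move=> sym [/eigenvalueP [v ev vnz] lmax] s2.
have e0 := congr1 (fun A : 'rV_2 => A 0 ord0) ev.
have e1 := congr1 (fun A : 'rV_2 => A 0 i1) ev.
rewrite /= !vB !mxE -sym -/a -/b -/c in e0 e1.
set v0 := v 0 ord0 in e0 e1; set v1 := v 0 i1 in e0 e1.
have nz : v0 != 0 \/ v1 != 0.
  case: (boolP (v0 == 0)) => [/eqP h0|]; last by left.
  right; apply/negP => /eqP h1; move/negP: vnz; apply; apply/eqP/matrixP => i jj.
  by rewrite (ord1 i) !mxE; case: (ord2_cases jj) => ->.
have det : (a - lam) * (c - lam) = b ^+ 2.
  have d0 : ((a - lam) * (c - lam) - b ^+ 2) * v0 = 0.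
    have : (c - lam) * (v0 * a + v1 * b - lam * v0) - b * (v0 * b + v1 * c - lam * v1) = 0.
      by rewrite e0 e1 !subrr; ring.
    by move=> <-; ring.
  have d1 : ((a - lam) * (c - lam) - b ^+ 2) * v1 = 0.
    have : (a - lam) * (v0 * b + v1 * c - lam * v1) - b * (v0 * a + v1 * b - lam * v0) = 0.
      by rewrite e0 e1 !subrr; ring.
    by move=> <-; ring.
  apply/eqP; rewrite -subr_eq0; apply/eqP.
  case: nz => /negPf nz.
    by move/eqP: d0; rewrite mulf_eq0 nz orbF => /eqP.
  by move/eqP: d1; rewrite mulf_eq0 nz orbF => /eqP.
have pq : 0 <= (lam - a) + (lam - c).
  rewrite leNgt; apply/negP => neg.
  set mu := a + c - lam.
  have : mu <= lam.
    apply: lmax.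
    case: (boolP (c - lam == 0)) => [/eqP q0|qnz].
      apply: (@eig2 B mu (lam - a) (- b)).
      - by left; apply/negP => /eqP h; lra.
      - rewrite -sym -/a -/b; rewrite /mu; nra.
      - rewrite -/b -/c /mu; nra.
    apply: (@eig2 B mu b (c - lam)).
    - by right.
    - rewrite -sym -/a -/b /mu; nra.
    - rewrite -/b -/c /mu; nra.
  rewrite /mu; lra.
have sb : s * b <= (lam - a + (lam - c)) / 2.
  have hp : 0 <= (lam - a) * (lam - c).
    have -> : (lam - a) * (lam - c) = b ^+ 2 by rewrite -det; ring.
    exact: sqr_ge0.
  have h2 : (2 * (s * b)) ^+ 2 <= (lam - a + (lam - c)) ^+ 2.
    have -> : (2 * (s * b)) ^+ 2 = 4 * ((a - lam) * (c - lam)) by rewrite exprMn exprMn s2 det; ring.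
    have : 0 <= (a - c) ^+ 2 := sqr_ge0 _.
    have : (lam - a + (lam - c))^+2 - 4*((a-lam)*(c-lam)) = (a-c)^+2 by ring.
    lra.
  nra.
rewrite -sym; lra.
Qed.

Lemma rv0 n (y : 'rV[R]_n) : y *m y^T = 0 -> y = 0.
Proof.
move=> /(congr1 (fun A : 'M_1 => A 0 0)); rewrite !mxE => E.
have pos : forall j : 'I_n, true -> 0 <= y 0 j * y^T j 0.
  by move=> j _; rewrite mxE -expr2; exact: sqr_ge0.
have h := psumr_eq0P pos E.
apply/matrixP => i j; rewrite (ord1 i) [RHS]mxE.
by have := h j isT; rewrite mxE => /eqP; rewrite mulf_eq0 orbb => /eqP.
Qed.

End Helpers.

Theorem mainTheorem10 (R : rcfType) (m n N : nat) (F : 'M[R]_(m, n))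
    (d0 dstar : 'I_n -> bool) :
  (2 <= m)%N -> (m <= N)%N -> (N <= n)%N ->
  \rank F = m ->
  is_design N d0 -> info_mx F d0 \in unitmx ->
  I_optimal N F dstar ->
  let alpha := Icrit F d0 in
  let Sigma := invmx (info_mx F dstar) in
  let G := invmx (F *m F^T) in
  (forall j k : 'I_m, `|Sigma j k| <= alpha * Num.sqrt (G j j * G k k)) /\
  (forall j k : 'I_m, j != k -> forall lam : R,
      is_lambda_max ((Ejk R j k)^T *m G *m Ejk R j k) lam ->
      `|Sigma j k| <= alpha / 2%:R * lam).
Proof.
move=> _ _ _ rkF d0D d0U [dsD dsU opt] alpha Sg G.
have MT : (info_mx F dstar)^T = info_mx F dstar by rewrite /info_mx sum_sym.
have SgT : Sg^T = Sg by rewrite /Sg trmx_inv MT.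
have HT : (F *m F^T)^T = F *m F^T by rewrite trmx_mul trmxK.
have HU : F *m F^T \in unitmx.
  rewrite -row_free_unit -kermx_eq0; apply: contraT => /rowV0Pn [x /sub_kermxP xH xnz].
  have : x *m F = 0.
    apply: rv0; by rewrite trmx_mul !mulmxA -(mulmxA x F F^T) xH mul0mx.
  by move/eqP; rewrite mulmx_free_eq0 ?(negPf xnz) // /row_free rkF.
have GT : G^T = G by rewrite /G trmx_inv HT.
have SgForm : forall x y : 'cV_m, (x^T *m Sg *m y) 0 0 = \sum_i (dstar i)%:R *
     (((col i F)^T *m (Sg *m x)) 0 0 * ((col i F)^T *m (Sg *m y)) 0 0).
  move=> x y.
  have -> : x^T *m Sg *m y = (Sg *m x)^T *m info_mx F dstar *m (Sg *m y).
    by rewrite trmx_mul SgT !mulmxA -(mulmxA x^T Sg (info_mx F dstar)) /Sg mulVmx // mulmx1.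
  rewrite [info_mx F dstar]/info_mx form_sum; apply: eq_bigr => i _.
  by congr (_ * (_ * _)); apply: scC.
have Sg_ge0 : forall x : 'cV_m, 0 <= (x^T *m Sg *m x) 0 0.
  move=> x; rewrite SgForm; apply/sumr_ge0 => i _.
  by apply: mulr_ge0; [apply: ler0n | rewrite -expr2; apply: sqr_ge0].
have SgCS : forall x y : 'cV_m, ((x^T *m Sg *m y) 0 0) ^+ 2 <=
    (x^T *m Sg *m x) 0 0 * (y^T *m Sg *m y) 0 0.
  by move=> x y; rewrite !SgForm; apply: CS => i; apply: ler0n.
set T := \sum_i ((col i F)^T *m Sg *m col i F) 0 0.
have TI : Icrit F dstar = T.
  by rewrite /Icrit /mxtrace; apply: eq_bigr => i _; rewrite [LHS]entry_form.
have T0 : 0 <= T by apply/sumr_ge0 => i _; apply: Sg_ge0.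
have Ta : T <= alpha by rewrite -TI; apply: opt.
have Gform : forall v : 'cV_m, (v^T *m G *m v) 0 0 =
    \sum_i 1 * (((col i F)^T *m (G *m v)) 0 0 * ((col i F)^T *m (G *m v)) 0 0).
  move=> v.
  have -> : v^T *m G *m v = (G *m v)^T *m (\sum_i 1 *: (col i F *m (col i F)^T)) *m (G *m v).
    by rewrite -FFT trmx_mul GT -(mulmxA (v^T *m G) (F *m F^T) (G *m v)) (mulmxA (F *m F^T) G v) /G mulmxV // mul1mx.
  by rewrite form_sum; apply: eq_bigr => i _; rewrite scC.
have G_ge0 : forall v : 'cV_m, 0 <= (v^T *m G *m v) 0 0.
  move=> v; rewrite Gform; apply/sumr_ge0 => i _.
  by rewrite mul1r -expr2; apply: sqr_ge0.
have key : forall v : 'cV_m, (v^T *m Sg *m v) 0 0 <= T * (v^T *m G *m v) 0 0.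
  move=> v.
  have e : (v^T *m Sg *m v) 0 0 = \sum_i 1 * ((v^T *m Sg *m col i F) 0 0 *
            ((col i F)^T *m (G *m v)) 0 0).
    have -> : v^T *m Sg *m v = (v^T *m Sg) *m (\sum_i 1 *: (col i F *m (col i F)^T)) *m (G *m v).
      by rewrite -FFT -(mulmxA (v^T *m Sg) (F *m F^T) (G *m v)) (mulmxA (F *m F^T) G v) /G mulmxV // mul1mx.
    by rewrite form_sum.
  have cs := @CS R n (fun=> 1) (fun i => (v^T *m Sg *m col i F) 0 0)
                  (fun i => ((col i F)^T *m (G *m v)) 0 0) (fun=> ler01).
  rewrite -e -Gform in cs.
  have hX : \sum_i 1 * ((v^T *m Sg *m col i F) 0 0 * (v^T *m Sg *m col i F) 0 0)
          <= (v^T *m Sg *m v) 0 0 * T.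
    rewrite /T mulr_sumr; apply: ler_sum => i _; rewrite mul1r -expr2; apply: SgCS.
  have := G_ge0 v; have := Sg_ge0 v.
  set sv := (v^T *m Sg *m v) 0 0; set gv := (v^T *m G *m v) 0 0 => sv0 gv0.
  have h : sv ^+ 2 <= sv * T * gv.
    apply: le_trans cs _; by apply: ler_wpM2r.
  have tg : 0 <= T * gv by apply: mulr_ge0.
  have [->|svp] := eqVneq sv 0; first by [].
  have svp' : 0 < sv by rewrite lt_def svp sv0.
  by rewrite -(ler_pM2l svp') -expr2 mulrA.
have key2 : forall v : 'cV_m, (v^T *m Sg *m v) 0 0 <= alpha * (v^T *m G *m v) 0 0.
  move=> v; apply: le_trans (key v) _; apply: ler_wpM2r => //; exact: G_ge0.
have a0 : 0 <= alpha by apply: le_trans Ta.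
have diag : forall j : 'I_m, 0 <= Sg j j /\ Sg j j <= alpha * G j j /\ 0 <= G j j.
  move=> j; have := Sg_ge0 (delta_mx j 0); have := key2 (delta_mx j 0).
  have := G_ge0 (delta_mx j 0); rewrite !form_delta; tauto.
have Sgs : forall j k, Sg k j = Sg j k.
  by move=> j k; rewrite -{1}SgT mxE.
have Gs : forall j k, G k j = G j k.
  by move=> j k; rewrite -{1}GT mxE.
split.
  move=> j k.
  have cs := SgCS (delta_mx j 0) (delta_mx k 0); rewrite !form_delta in cs.
  have [sj [sja gj]] := diag j; have [sk [ska gk]] := diag k.
  have lhs0 : 0 <= `|Sg j k| := normr_ge0 _.
  have rhs0 : 0 <= alpha * Num.sqrt (G j j * G k k) := mulr_ge0 a0 (sqrtr_ge0 _).
  have := @ler_sqr R `|Sg j k| (alpha * Num.sqrt (G j j * G k k)).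
  rewrite !nnegrE => /(_ lhs0 rhs0) <-.
  have gg : 0 <= G j j * G k k := mulr_ge0 gj gk.
  rewrite exprMn (sqr_sqrtr gg) (real_normK (num_real _)).
  apply: le_trans cs _.
  have : Sg j j * Sg k k <= (alpha * G j j) * (alpha * G k k) by apply: ler_pM.
  have -> : (alpha * G j j) * (alpha * G k k) = alpha ^+ 2 * (G j j * G k k) by ring.
  by [].
move=> j k _ lam lm.
pose s : R := if 0 <= Sg j k then 1 else -1.
have s2 : s ^+ 2 = 1 by rewrite /s; case: ifP => _; ring.
have sa : s * Sg j k = `|Sg j k|.
  rewrite /s; case: ifP => h; first by rewrite mul1r ger0_norm.
  by rewrite ler0_norm ?mulN1r // ltW // ltNge h.
have hv := key2 (delta_mx j 0 + s *: delta_mx k 0).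
have hw := Sg_ge0 (delta_mx j 0 + (- s) *: delta_mx k 0).
rewrite !formJK in hv hw.
rewrite (Sgs j k) (Gs j k) in hv; rewrite (Sgs j k) in hw.
pose E := Ejk R j k.
have cE0 : col ord0 E = delta_mx j 0.
  apply/matrixP => p q; rewrite (ord1 q) [LHS]mxE /E /Ejk.
  have -> : (ord0 : 'I_(1 + 1)) = lshift 1 ord0 by apply: val_inj.
  exact: row_mxEl.
have cE1 : col (lift ord0 ord0) E = delta_mx k 0.
  apply/matrixP => p q; rewrite (ord1 q) [LHS]mxE /E /Ejk.
  have -> : (lift ord0 ord0 : 'I_(1 + 1)) = rshift 1 ord0 by apply: val_inj.
  exact: row_mxEr.
set BB := (Ejk R j k)^T *m G *m Ejk R j k in lm.
have B00 : BB ord0 ord0 = G j j by rewrite /BB entry_form -/E cE0 form_delta.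
have B01 : BB ord0 (lift ord0 ord0) = G j k by rewrite /BB entry_form -/E cE0 cE1 form_delta.
have B10 : BB (lift ord0 ord0) ord0 = G j k by rewrite /BB entry_form -/E cE0 cE1 form_delta Gs.
have B11 : BB (lift ord0 ord0) (lift ord0 ord0) = G k k by rewrite /BB entry_form -/E cE1 form_delta.
have hl' := @lam2 R BB lam s (etrans B01 (esym B10)) lm s2.
rewrite B00 B01 B10 B11 in hl'.
have : `|Sg j k| * 4 <= alpha * (2 * lam).
  apply: (le_trans _ (le_trans hv _)).
    rewrite -sa; have : (- s) ^+ 2 = 1 by rewrite sqrrN.
    move=> s2'; rewrite s2' in hw; rewrite s2; lra.
  apply: ler_wpM2l => //; rewrite s2; lra.
move=> h; lra.
Qed.
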